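(* As closed quantum subgroups of $U_N^+$, $\mathbb TO_N^+\cap U_N^\times=\mathbb TO_N^*$. Equivalently: if the standard coordinates $u_{ij}$ of a closed quantum subgroup $G\subset U_N^+$ satisfy $ab^*=a^*b$ and $ab^*c=cb^*a$ for all $a,b,c\in\{u_{ij}\}$, then they satisfy $abc=cba$ for all $a,b,c\in\{u_{ij},u_{ij}^*\}$.
   Context: $C(U_N^+)$ is the universal unital C*-algebra generated by $u_{ij}$ such that $u=(u_{ij})$ and $\bar u=(u_{ij}^* )$ are unitary, a compact quantum group with $\Delta(u_{ij})=\sum_ku_{ik}\otimes u_{kj}$; closed quantum subgroups correspond to Hopf quotients, and an intersection $G\cap H$ corresponds to imposing both sets of relations. $\mathbb TO_N^+$: impose $ab^*=a^*b$ for $a,b\in\{u_{ij}\}$; $U_N^\times$: impose $ab^*c=cb^*a$ for $a,b,c\in\{u_{ij}\}$; $U_N^{**}$: impose $abc=cba$ for $a,b,c\in\{u_{ij},u_{ij}^*\}$; $\mathbb TO_N^*=\mathbb TO_N^+\cap U_N^{**}$. *)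

(* Defs.v *)
From HB Require Import structures.
From mathcomp Require Import all_boot all_order all_algebra all_field.
Set Implicit Arguments. Unset Strict Implicit. Unset Printing Implicit Defensive.
Import Order.TTheory GRing.Theory Num.Theory.
Local Open Scope ring_scope.

Definition is_star (A : algType algC) (st : A -> A) : Prop :=
  [/\ forall x y : A, st (x + y) = st x + st y,
      forall (c : algC) (x : A), st (c *: x) = (c^*)%C *: st x,
      forall x y : A, st (x * y) = st y * st x
    & forall x : A, st (st x) = x].

Definition adjmx (A : algType algC) (st : A -> A) (N : nat) (M : 'M[A]_N) :
  'M[A]_N := (map_mx st M)^T.

Definition unitary_mx (A : algType algC) (st : A -> A) (N : nat) (M : 'M[A]_N) :
  Prop := M *m adjmx st M = 1%:M /\ adjmx st M *m M = 1%:M.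

(* u = (u_ij) and ubar = (u_ij^* ) are unitary: the defining relations of C(U_N^+) *)
Definition UNplus_rel (A : algType algC) (st : A -> A) (N : nat) (u : 'M[A]_N) :
  Prop := unitary_mx st u /\ unitary_mx st (map_mx st u).

Definition TOplus_rel (A : algType algC) (st : A -> A) (N : nat) (u : 'M[A]_N) :
  Prop := forall i j k l, u i j * st (u k l) = st (u i j) * u k l.

Definition Utimes_rel (A : algType algC) (st : A -> A) (N : nat) (u : 'M[A]_N) :
  Prop := forall i j k l m n,
    u i j * st (u k l) * u m n = u m n * st (u k l) * u i j.

Definition coord_or_star (A : algType algC) (st : A -> A) (N : nat) (u : 'M[A]_N)
  (x : A) : Prop := exists i j, x = u i j \/ x = st (u i j).

Definition Ustarstar_rel (A : algType algC) (st : A -> A) (N : nat) (u : 'M[A]_N) :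
  Prop := forall a b c, coord_or_star st u a -> coord_or_star st u b ->
    coord_or_star st u c -> a * b * c = c * b * a.

(* Main.v *)
Require Import Defs.
From HB Require Import structures.
From mathcomp Require Import all_boot all_order all_algebra all_field.
Import GRing.Theory.
Local Open Scope ring_scope.

Set Implicit Arguments.
Section S.
Variables (A : algType algC) (st : A -> A) (N : nat) (u : 'M[A]_N).
Hypothesis Hst : is_star st.
Hypothesis Hun : UNplus_rel st u.
Hypothesis Hto : TOplus_rel st u.
Hypothesis Hx : Utimes_rel st u.

Definition G (x : A) := exists i j, x = u i j.

Lemma stM x y : st (x * y) = st y * st x.
Proof. by case: Hst. Qed.
Lemma stK x : st (st x) = x.
Proof. by case: Hst. Qed.

Lemma L1 {p q} : G p -> G q -> p * st q = st p * q.
Proof. by move=> [i [j ->]] [k [l ->]]; apply: Hto. Qed.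
Lemma L2 {a b c} : G a -> G b -> G c -> a * st b * c = c * st b * a.
Proof. by move=> [i [j ->]] [k [l ->]] [m [n ->]]; apply: Hx. Qed.

Lemma term {a b c x} : G a -> G b -> G c -> G x ->
  a * b * c * st x = c * b * a * st x.
Proof.
move=> Ga Gb Gc Gx.
rewrite -(mulrA _ c) (L1 Gc Gx) -(mulrA a) (mulrA b) (L2 Gb Gc Gx).
rewrite (L1 Gx Gc) mulrA mulrA (L2 Ga Gx Gc).
rewrite -(mulrA c) -(mulrA c) -(L1 Gx Ga) (L2 Gx Ga Gb).
by rewrite -(mulrA b) -(L1 Ga Gx) !mulrA.
Qed.

Lemma zero {a b c} : G a -> G b -> G c -> a * b * c = c * b * a.
Proof.
move=> Ga Gb Gc; case: (Ga) => i [j _].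
have E : \sum_k st (u k i) * u k i = 1.
  case: Hun => [[_ H2] _].
  have := congr1 (fun M : 'M[A]_N => M i i) H2.
  rewrite !mxE eqxx /= mulr1n => H; rewrite -H; apply: eq_bigr => k _; by rewrite !mxE.
rewrite -(mulr1 (a*b*c)) -(mulr1 (c*b*a)) -E !mulr_sumr.
apply: eq_bigr => k _; rewrite !mulrA term //; by exists k, i.
Qed.

Lemma one_first {a b c} : G a -> G b -> G c -> st a * b * c = c * b * st a.
Proof.
move=> Ga Gb Gc; rewrite -(L1 Ga Gb) (L2 Ga Gb Gc) -mulrA -(L1 Gb Ga) mulrA.
done.
Qed.

Lemma flip x y z : x * y * z = z * y * x -> st z * st y * st x = st x * st y * st z.
Proof. move=> E; by rewrite -!stM mulrA E -mulrA. Qed.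

End S.

Theorem proposition3p6 (A : algType algC) (st : A -> A) (N : nat) (u : 'M[A]_N) :
  is_star st -> UNplus_rel st u ->
  TOplus_rel st u -> Utimes_rel st u ->
  Ustarstar_rel st u.
Proof.
move=> Hst Hun Hto Hx a b c [i [j Ha]] [k [l Hb]] [m [n Hc]].
have Gp : forall (i j : 'I_N), exists i0 j0, u i j = u i0 j0 by move=> p q; exists p, q.
have Z := zero Hun Hto Hx (Gp _ _) (Gp _ _) (Gp _ _).
have O1 := one_first Hto Hx (Gp _ _) (Gp _ _) (Gp _ _).
have O2 := L2 Hx (Gp _ _) (Gp _ _) (Gp _ _).
have F := flip Hst.
have K := stK Hst.
case: Ha => ->; case: Hb => ->; case: Hc => ->.
- exact: Z.
- symmetry; exact: O1.
- exact: O2.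
- rewrite -(K (u i j)); apply: F; symmetry; exact: O1.
- exact: O1.
- rewrite -(K (u k l)); apply: F; exact: O2.
- rewrite -(K (u m n)); apply: F; exact: O1.
- apply: F; exact: Z.
Qed.
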